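(* Let $p$ be a prime, let $G$ be a pseudosimple group of split-$p$-$p$ type, and let $C=(C_1,\dots,C_r)$ be a list of unambiguous conjugacy classes of $G$. Then $H_2(G)_C\neq H_2'(G)_C$ if and only if none of the $C_i$ is inert and at least one of the $C_i$ is mixed.
   Context: $G'$ is the derived subgroup, $G^{\mathrm{ab}}=G/G'$. $G$ is pseudosimple if it is a finite centerless group, $G'$ is isomorphic to a power of a nonabelian simple group, and $G/N$ is abelian for every nontrivial normal subgroup $N$. It has split-$p$-$p$ type if $G\to G^{\mathrm{ab}}$ has a section and $|G^{\mathrm{ab}}|=|H_2(G,\mathbb{Z})|=p$. A class is unambiguous if conjugation by $G'$ acts transitively on it. $H_2(G)=H_2(G,\mathbb{Z})$ (the Schur multiplier). For commuting $x,y\in G$, $\langle x,y\rangle\in H_2(G)$ is the image of the fundamental class of $H_2(\mathbb{Z}^2)$ under $(m,n)\mapsto x^my^n$. $H_2(G)_C$ is the subgroup generated by all $\langle g,z\rangle$ with $g\in\bigcup C_i$, $z\in Z(g)$; $H_2'(G)_C$ is the subgroup generated by all $\langle g,z\rangle$ with $g\in\bigcup C_i$, $z\in Z(g)\cap G'$. Let $\tilde G\to G$ be a Schur cover (a central stem extension with kernel $H_2(G)$). An unambiguous class $C_i$ with preimage $\tilde C_i\subseteq\tilde G$ is split if $\tilde C_i$ consists of $p$ conjugacy classes of $\tilde G$; mixed if $\tilde C_i$ is a single $\tilde G$-conjugacy class but splits into $p$ distinct orbits under conjugation by $\tilde G'$; inert otherwise. *)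

(* Defs.v *)
From HB Require Import structures.
From mathcomp Require Import all_boot all_order all_algebra all_fingroup all_solvable.
Set Implicit Arguments. Unset Strict Implicit. Unset Printing Implicit Defensive.
Import GRing.Theory.
Local Open Scope group_scope.

Definition power_of_nonabelian_simple (gT : finGroupType) (K : {set gT}) : Prop :=
  exists (sT : finGroupType) (S : {group sT}) (n : nat) (H : 'I_n -> {group gT}),
    [/\ simple S, ~~ abelian S, (forall i, H i \isog S)
      & \big[dprod/1]_(i < n) H i = K].

Definition pseudosimple (gT : finGroupType) (G : {group gT}) : Prop :=
  [/\ 'Z(G) = 1,
      power_of_nonabelian_simple G^`(1)
    & forall N : {group gT}, N <| G -> N :!=: 1 -> abelian (G / N)].

(* Chains: C_1 = Z[G], C_2 = Z[G^2], C_3 = Z[G^3], encoded as integer-valued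
   functions on gT, gT*gT, gT*gT*gT whose support lies in G (resp. G^2, G^3). *)
Local Open Scope ring_scope.

Definition bd2 (gT : finGroupType) (c : {ffun gT * gT -> int}) : {ffun gT -> int} :=
  [ffun g => \sum_(u : gT * gT)
     c u * ((u.2 == g)%:R - ((u.1 * u.2)%g == g)%:R + (u.1 == g)%:R)].

Definition bd3 (gT : finGroupType) (f : {ffun gT * gT * gT -> int})
  : {ffun gT * gT -> int} :=
  [ffun v => \sum_(u : gT * gT * gT)
     f u * (((u.1.2, u.2) == v)%:R - (((u.1.1 * u.1.2)%g, u.2) == v)%:R
            + ((u.1.1, (u.1.2 * u.2)%g) == v)%:R - ((u.1.1, u.1.2) == v)%:R)].

Definition supp2 (gT : finGroupType) (G : {set gT}) (c : {ffun gT * gT -> int}) :=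
  forall u, c u != 0 -> (u.1 \in G) && (u.2 \in G).

Definition supp3 (gT : finGroupType) (G : {set gT}) (f : {ffun gT * gT * gT -> int}) :=
  forall u, f u != 0 -> [&& u.1.1 \in G, u.1.2 \in G & u.2 \in G].

Definition cycle2 (gT : finGroupType) (G : {set gT}) (c : {ffun gT * gT -> int}) :=
  supp2 G c /\ bd2 c = 0.

Definition bdry2 (gT : finGroupType) (G : {set gT}) (c : {ffun gT * gT -> int}) :=
  exists f, supp3 G f /\ c = bd3 f.

(* |H_2(G,Z)| = n : the quotient of 2-cycles by 2-boundaries has exactly n elements *)
Definition H2_order (gT : finGroupType) (G : {set gT}) (n : nat) : Prop :=
  exists s : seq {ffun gT * gT -> int},
    [/\ size s = n,
        (forall c, c \in s -> cycle2 G c),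
        (forall i j, (i < n)%N -> (j < n)%N -> i != j ->
           ~ bdry2 G (nth 0 s i - nth 0 s j))
      & forall c, cycle2 G c -> exists2 c', c' \in s & bdry2 G (c - c')].

(* <x,y> for commuting x, y: class of the cycle [x|y] - [y|x], the image of the
   fundamental class of H_2(Z^2) under (m,n) |-> x^m y^n. *)
Definition pair2 (gT : finGroupType) (x y : gT) : {ffun gT * gT -> int} :=
  [ffun u => (u == (x, y))%:R - (u == (y, x))%:R].

(* c lies in the subgroup of H_2(G) generated by the classes of the chains in S:
   c is congruent mod boundaries to an integer combination of elements of S *)
Definition in_span_H2 (gT : finGroupType) (G : {set gT})
  (S : {ffun gT * gT -> int} -> Prop) (c : {ffun gT * gT -> int}) : Prop :=
  exists s : seq (int * {ffun gT * gT -> int}),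
    (forall a, a \in s -> S a.2) /\
    bdry2 G (c - \sum_(a <- s) (a.2 *~ a.1)).

Definition H2_C (gT : finGroupType) (G : {group gT}) (r : nat)
  (C : 'I_r -> {set gT}) : {ffun gT * gT -> int} -> Prop :=
  in_span_H2 G (fun c => exists i g z,
    [/\ g \in C i, z \in ('C_G[g])%g & c = pair2 g z]).

Definition H2'_C (gT : finGroupType) (G : {group gT}) (r : nat)
  (C : 'I_r -> {set gT}) : {ffun gT * gT -> int} -> Prop :=
  in_span_H2 G (fun c => exists i g z,
    [/\ g \in C i, z \in ('C_G[g] :&: G^`(1))%g & c = pair2 g z]).

Definition same_subgroup_H2 (gT : finGroupType) (G : {set gT})
  (P Q : {ffun gT * gT -> int} -> Prop) : Prop :=
  forall c, cycle2 G c -> (P c <-> Q c).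

Local Close Scope ring_scope.

Definition split_pp_type (p : nat) (gT : finGroupType) (G : {group gT}) : Prop :=
  [/\ exists s : {morphism (G / G^`(1))%G >-> gT},
        forall x, x \in G / G^`(1) -> s x \in G /\ coset G^`(1) (s x) = x,
      #|G / G^`(1)| = p
    & H2_order G p].

Definition unambiguous (gT : finGroupType) (G : {group gT}) (C : {set gT}) : Prop :=
  C \in classes G /\
  forall x y, x \in C -> y \in C -> exists2 g, g \in G^`(1) & y = x ^ g.

(* Schur cover pi : Gt ->> G : central stem extension with kernel H_2(G)
   (kernel of the same order as H_2(G)) *)
Definition schur_cover (gT sT : finGroupType) (G : {group gT}) (Gt : {group sT})
  (pi : {morphism Gt >-> gT}) : Prop :=
  [/\ pi @* Gt = G, 'ker pi \subset 'Z(Gt), 'ker pi \subset Gt^`(1)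
    & H2_order G #|'ker pi|].

Definition split_class (p : nat) (gT sT : finGroupType) (Gt : {group sT})
  (pi : {morphism Gt >-> gT}) (C : {set gT}) : Prop :=
  #|[set x ^: Gt | x in pi @*^-1 C]| = p.

Definition mixed_class (p : nat) (gT sT : finGroupType) (Gt : {group sT})
  (pi : {morphism Gt >-> gT}) (C : {set gT}) : Prop :=
  #|[set x ^: Gt | x in pi @*^-1 C]| = 1%N /\
  #|[set x ^: Gt^`(1) | x in pi @*^-1 C]| = p.

Definition inert_class (p : nat) (gT sT : finGroupType) (Gt : {group sT})
  (pi : {morphism Gt >-> gT}) (C : {set gT}) : Prop :=
  ~ split_class p pi C /\ ~ mixed_class p pi C.

(* Main.v *)
Require Import Defs.
From HB Require Import structures.
From mathcomp Require Import all_boot all_order all_algebra all_fingroup all_solvable.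
From Stdlib Require Import ClassicalEpsilon Classical.
From mathcomp Require Import ring.
Set Implicit Arguments. Unset Strict Implicit. Unset Printing Implicit Defensive.
Import GRing.Theory.

Section Chains.
Variable gT : finGroupType.
Variable G : {set gT}.
Local Open Scope ring_scope.
Implicit Types a b c : {ffun gT * gT -> int}.
Implicit Types f h : {ffun gT * gT * gT -> int}.

Lemma bd2D a b : bd2 (a + b) = bd2 a + bd2 b.
Proof. apply/ffunP=> g; rewrite !ffunE -big_split /=; apply: eq_bigr => u _; by by rewrite ffunE mulrDl. Qed.
Lemma bd2N a : bd2 (- a) = - bd2 a.
Proof. apply/ffunP=> g; rewrite !ffunE -sumrN; apply: eq_bigr => u _; by rewrite ffunE mulNr. Qed.
Lemma bd2B a b : bd2 (a - b) = bd2 a - bd2 b.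
Proof. by rewrite bd2D bd2N. Qed.
Lemma bd20 : bd2 (0 : {ffun gT * gT -> int}) = 0.
Proof. by rewrite -(subrr 0) bd2B subrr. Qed.
Lemma bd2Mz a k : bd2 (a *~ k) = bd2 a *~ k.
Proof. apply/ffunP=> g; rewrite ffunMzE !ffunE mulrz_suml; apply: eq_bigr => u _; by rewrite ffunMzE mulrzAl. Qed.
Lemma bd3D f h : bd3 (f + h) = bd3 f + bd3 h.
Proof. apply/ffunP=> g; rewrite !ffunE -big_split /=; apply: eq_bigr => u _; by by rewrite ffunE mulrDl. Qed.
Lemma bd3N f : bd3 (- f) = - bd3 f.
Proof. apply/ffunP=> g; rewrite !ffunE -sumrN; apply: eq_bigr => u _; by rewrite ffunE mulNr. Qed.
Lemma bd30 : bd3 (0 : {ffun gT * gT * gT -> int}) = 0.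
Proof. by rewrite -(subrr 0) bd3D bd3N subrr. Qed.

Lemma supp2D a b : supp2 G a -> supp2 G b -> supp2 G (a + b).
Proof.
move=> ha hb u; rewrite ffunE; case: (eqVneq (a u) 0) => [->|/ha //].
by rewrite add0r; apply: hb.
Qed.
Lemma supp2N a : supp2 G a -> supp2 G (- a).
Proof. by move=> ha u; rewrite ffunE oppr_eq0; apply: ha. Qed.
Lemma supp2B a b : supp2 G a -> supp2 G b -> supp2 G (a - b).
Proof. by move=> ha hb; apply: supp2D => //; apply: supp2N. Qed.
Lemma supp20 : supp2 G (0 : {ffun gT * gT -> int}).
Proof. by move=> u; rewrite ffunE eqxx. Qed.
Lemma supp2Mz a k : supp2 G a -> supp2 G (a *~ k).
Proof.
move=> ha u; rewrite ffunMzE; case: (eqVneq (a u) 0) => [->|/ha //].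
by rewrite mul0rz eqxx.
Qed.
Lemma supp3D f h : supp3 G f -> supp3 G h -> supp3 G (f + h).
Proof.
move=> ha hb u; rewrite ffunE; case: (eqVneq (f u) 0) => [->|/ha //].
by rewrite add0r; apply: hb.
Qed.
Lemma supp3N f : supp3 G f -> supp3 G (- f).
Proof. by move=> ha u; rewrite ffunE oppr_eq0; apply: ha. Qed.
Lemma supp30 : supp3 G (0 : {ffun gT * gT * gT -> int}).
Proof. by move=> u; rewrite ffunE eqxx. Qed.

Lemma bdry0 : bdry2 G (0 : {ffun gT * gT -> int}).
Proof. by exists 0; rewrite bd30; split=> //; apply: supp30. Qed.
Lemma bdryD a b : bdry2 G a -> bdry2 G b -> bdry2 G (a + b).
Proof.
move=> [f [sf ->]] [h [sh ->]]; exists (f + h); split; last by rewrite bd3D.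
exact: supp3D.
Qed.
Lemma bdryN a : bdry2 G a -> bdry2 G (- a).
Proof. move=> [f [sf ->]]; exists (- f); split; [exact: supp3N | by rewrite bd3N]. Qed.
Lemma bdryB a b : bdry2 G a -> bdry2 G b -> bdry2 G (a - b).
Proof. by move=> ha hb; apply: bdryD => //; apply: bdryN. Qed.

Lemma cycleD a b : cycle2 G a -> cycle2 G b -> cycle2 G (a + b).
Proof. by move=> [sa ba] [sb bb]; split; [apply: supp2D | rewrite bd2D ba bb addr0]. Qed.
Lemma cycleN a : cycle2 G a -> cycle2 G (- a).
Proof. by move=> [sa ba]; split; [apply: supp2N | rewrite bd2N ba oppr0]. Qed.
Lemma cycleB a b : cycle2 G a -> cycle2 G b -> cycle2 G (a - b).
Proof. by move=> ha hb; apply: cycleD => //; apply: cycleN. Qed.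
Lemma cycle0 : cycle2 G (0 : {ffun gT * gT -> int}).
Proof. by split; [apply: supp20 | apply: bd20]. Qed.
Lemma cycleMz a k : cycle2 G a -> cycle2 G (a *~ k).
Proof. by move=> [sa ba]; split; [apply: supp2Mz | rewrite bd2Mz ba mul0rz]. Qed.

Lemma H2_order_le n m : H2_order G n -> H2_order G m -> (n <= m)%N.
Proof.
move=> [s [sz scyc sdis scov]] [t [tz tcyc tdis tcov]].
have ex: forall i : 'I_n, exists j : 'I_m, bdry2 G (nth 0 s i - nth 0 t j).
  move=> i; have si : nth 0 s i \in s by rewrite mem_nth // sz.
  have [c' c't hb] := tcov _ (scyc _ si).
  have hj : (index c' t < m)%N by rewrite -tz index_mem.
  by exists (Ordinal hj); rewrite /= nth_index.
pose F (i : 'I_n) : 'I_m := proj1_sig (constructive_indefinite_description _ (ex i)).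
have FP (i : 'I_n) : bdry2 G (nth 0 s i - nth 0 t (F i)).
  by rewrite /F; case: constructive_indefinite_description.
have injF : injective F.
  move=> i i' e; apply/eqP; apply/negPn/negP => ne.
  apply: (sdis i i') => //.
  have := bdryB (FP i) (FP i'); rewrite e.
  by rewrite opprB addrA subrK.
by have := leq_card F injF; rewrite !card_ord.
Qed.

Lemma H2_order_uniq n m : H2_order G n -> H2_order G m -> n = m.
Proof. by move=> hn hm; apply/eqP; rewrite eqn_leq !(H2_order_le hn hm, H2_order_le hm hn). Qed.

End Chains.

Local Open Scope group_scope.

Section Cover2.
Variables (gT sT : finGroupType) (G : {group gT}) (Gt : {group sT}).
Variable pi : {morphism Gt >-> gT}.
Hypothesis piG : pi @* Gt = G.
Hypothesis kerZ : 'ker pi \subset 'Z(Gt).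
Hypothesis primeZ : prime #|'ker pi|.
Hypothesis kerD : 'ker pi \subset Gt^`(1).

Local Notation Z := ('ker pi).

Definition sec (x : gT) : sT :=
  if x == 1%g then 1%g else odflt 1%g [pick y in Gt | pi y == x].

Lemma secG x : x \in G -> sec x \in Gt /\ pi (sec x) = x.
Proof.
rewrite /sec; case: eqP => [-> _|_]; first by rewrite group1 morph1.
rewrite -piG => /morphimP[y Dy _ ->].
case: pickP => [y' /andP[Dy' /eqP ->] //| /(_ y)]; by rewrite Dy eqxx.
Qed.
Lemma secG1 x : x \in G -> sec x \in Gt.
Proof. by case/secG. Qed.
Lemma secP x : x \in G -> pi (sec x) = x.
Proof. by case/secG. Qed.
Lemma sec1 : sec 1 = 1%g.
Proof. by rewrite /sec eqxx. Qed.

Lemma ZGt z : z \in Z -> z \in Gt.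
Proof. by move=> /(subsetP kerZ)/centerP[]. Qed.

Lemma Zcomm z y : z \in Z -> y \in Gt -> (z * y = y * z)%g.
Proof. by move=> /(subsetP kerZ)/centerP[_ h] /h. Qed.

Lemma inZ t : t \in Gt -> pi t = 1%g -> t \in Z.
Proof. by move=> Dt; move/(kerP pi Dt). Qed.

Lemma piG1 t : t \in Gt -> pi t \in G.
Proof. by move=> Dt; rewrite -piG mem_morphim. Qed.

Definition fc (x y : gT) : sT := (sec x * sec y * (sec (x * y))^-1)%g.

Lemma fcZ x y : x \in G -> y \in G -> fc x y \in Z.
Proof.
move=> Gx Gy; have Gxy := groupM Gx Gy.
have D1 := secG1 Gx; have D2 := secG1 Gy; have D3 := secG1 Gxy.
apply: inZ; first by rewrite !(groupM, groupV).
by rewrite !(morphM, morphV, groupM, groupV) // !secP // mulgV.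
Qed.

Definition z0 : sT := odflt 1%g [pick z | Z == <[z]>%g].
Lemma Zgen : Z = <[z0]>%g.
Proof.
rewrite /z0; case: pickP => [z /eqP //|none].
have /cyclicP[z hz] := prime_cyclic primeZ.
by have := none z; rewrite hz eqxx.
Qed.

Local Notation q := #|Z|.
Lemma q_gt1 : (1 < q)%N. Proof. exact: prime_gt1. Qed.
Lemma ordz0 : #[z0]%g = q. Proof. by rewrite orderE -Zgen. Qed.

Local Open Scope ring_scope.

Definition L (x : sT) : 'Z_q :=
  if [pick k : 'I_q | (z0 ^+ k)%g == x] is Some k then (k : nat)%:R else 0.

Lemma LX k : L (z0 ^+ k)%g = k%:R.
Proof.
rewrite /L; case: pickP => [k' /eqP e|none].
  have h : (k' : nat) = k %[mod #[z0]] by apply/eqP; rewrite -eq_expg_mod_order e.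
  by rewrite ordz0 in h; rewrite -(Zp_nat_mod q_gt1 k') h Zp_nat_mod // q_gt1.
have hk : (k %% q < q)%N by rewrite ltn_mod; case: (q) q_gt1.
by have := none (Ordinal hk); rewrite /= -ordz0 expg_mod_order eqxx.
Qed.

Lemma ZP x : x \in Z -> exists k, x = (z0 ^+ k)%g.
Proof. by rewrite Zgen => /cycleP. Qed.

Lemma LM x y : x \in Z -> y \in Z -> L (x * y)%g = L x + L y.
Proof.
move=> /ZP[a ->] /ZP[b ->]; by rewrite -expgD !LX natrD.
Qed.
Lemma L1 : L 1%g = 0.
Proof. by rewrite -(expg0 z0) LX. Qed.
Lemma LV x : x \in Z -> L x^-1%g = - L x.
Proof.
move=> Zx; apply/eqP; rewrite -addr_eq0 -LM ?groupV //.
by rewrite mulVg L1.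
Qed.
Lemma LXn x k : x \in Z -> L (x ^+ k)%g = L x *+ k.
Proof.
move=> Zx; elim: k => [|k IH]; first by rewrite expg0 L1.
by rewrite expgS LM ?groupX // IH mulrS.
Qed.
Lemma L_inj x y : x \in Z -> y \in Z -> L x = L y -> x = y.
Proof.
move=> /ZP[a ->] /ZP[b ->]; rewrite !LX => e; apply/eqP.
rewrite eq_expg_mod_order ordz0 -(val_Zp_nat q_gt1 a) -(val_Zp_nat q_gt1 b).
by rewrite e.
Qed.
Lemma L_eq0 x : x \in Z -> L x = 0 -> x = 1%g.
Proof. by move=> Zx e; apply: L_inj => //; rewrite L1. Qed.
Lemma L_surj (v : 'Z_q) : v = L (z0 ^+ v)%g.
Proof.
rewrite LX; apply: val_inj; rewrite /= val_Zp_nat ?modn_small //; last exact: q_gt1.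
by have := ltn_ord v; move: (nat_of_ord v) => n; rewrite Zp_cast // q_gt1.
Qed.
Lemma z0Z : z0 \in Z. Proof. by rewrite Zgen cycle_id. Qed.


Definition Lf (u : gT * gT) : 'Z_q := L (fc u.1 u.2).
Definition Phi (c : {ffun gT * gT -> int}) : 'Z_q := \sum_u (c u)%:~R * Lf u.

Lemma PhiD a b : Phi (a + b) = Phi a + Phi b.
Proof. rewrite /Phi -big_split; apply: eq_bigr => u _; by rewrite ffunE rmorphD mulrDl. Qed.
Lemma Phi0 : Phi 0 = 0.
Proof. by rewrite /Phi big1 // => u _; rewrite ffunE mul0r. Qed.
Lemma PhiN a : Phi (- a) = - Phi a.
Proof. rewrite /Phi -sumrN; apply: eq_bigr => u _; by rewrite ffunE rmorphN mulNr. Qed.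
Lemma PhiB a b : Phi (a - b) = Phi a - Phi b.
Proof. by rewrite PhiD PhiN. Qed.
Lemma PhiMz a k : Phi (a *~ k) = Phi a *~ k.
Proof.
rewrite /Phi mulrz_suml; apply: eq_bigr => u _.
by rewrite ffunMzE mulrzz intrM mulrAC mulrzr.
Qed.
Lemma Phi_sum (I : Type) (r : seq I) (F : I -> {ffun gT * gT -> int}) :
  Phi (\sum_(i <- r) F i) = \sum_(i <- r) Phi (F i).
Proof. exact: (big_morph Phi PhiD Phi0). Qed.

Definition delta2 (x y : gT) : {ffun gT * gT -> int} := [ffun u => ((u == (x, y))%:R : int)].
Definition delta1 (x : gT) : {ffun gT -> int} := [ffun g => ((x == g)%:R : int)].

Lemma sum_delta (T : finType) (a : T) (h : T -> 'Z_q) :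
  \sum_v ((a == v)%:R : int)%:~R * h v = h a.
Proof.
rewrite (bigD1 a) //= eqxx big1 ?addr0 ?mul1r // => v /negbTE ne.
by rewrite eq_sym ne mul0r.
Qed.

Lemma Phi_delta x y : Phi (delta2 x y) = Lf (x, y).
Proof.
rewrite /Phi /delta2 (bigD1 (x, y)) //= !ffunE eqxx big1 ?addr0 ?mul1r // => v /negbTE ne.
by rewrite ffunE ne mul0r.
Qed.

Lemma bd2_delta x y : bd2 (delta2 x y) = delta1 y - delta1 (x * y) + delta1 x.
Proof.
apply/ffunP=> g; rewrite /delta2 /delta1 !ffunE (bigD1 (x, y)) //= !ffunE eqxx mul1r big1 ?addr0 //.
by move=> v /negbTE ne; rewrite ffunE ne mul0r.
Qed.

Lemma supp2_delta x y : x \in G -> y \in G -> supp2 G (delta2 x y).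
Proof.
move=> Gx Gy u; rewrite /delta2 ffunE; case: (eqVneq u (x, y)) => [-> _ | _]; first by rewrite Gx Gy.
by rewrite eqxx.
Qed.

Lemma pair2E x y : pair2 x y = delta2 x y - delta2 y x.
Proof. by apply/ffunP=> u; rewrite /delta2 !ffunE. Qed.

Lemma cocycle x y z : x \in G -> y \in G -> z \in G ->
  (fc y z * fc x (y * z) = fc x y * fc (x * y) z)%g.
Proof.
move=> Gx Gy Gz.
have e1 : (fc x y * fc (x * y) z = sec x * sec y * sec z * (sec (x * y * z))^-1)%g.
  by rewrite /fc !mulgA mulgKV.
have e2 : (fc y z * sec x = sec x * fc y z)%g.
  by rewrite Zcomm // ?fcZ // secG1.
have -> : fc x (y * z) = (sec x * (sec (y * z) * (sec (x * (y * z)))^-1))%g.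
  by rewrite /fc -mulgA.
rewrite e1 mulgA e2 -!mulgA; congr (_ * _)%g.
by rewrite mulKg.
Qed.


Lemma Lf_cocycle x y z : x \in G -> y \in G -> z \in G ->
  Lf (y, z) - Lf (x * y, z)%g + Lf (x, y * z)%g - Lf (x, y) = 0.
Proof.
move=> Gx Gy Gz; rewrite /Lf /=.
have e := cocycle Gx Gy Gz.
have := congr1 L e.
rewrite (LM (fcZ Gy Gz) (fcZ Gx (groupM Gy Gz))) (LM (fcZ Gx Gy) (fcZ (groupM Gx Gy) Gz)) => e'.
transitivity ((L (fc y z) + L (fc x (y * z))) - (L (fc x y) + L (fc (x * y) z))); first ring.
by rewrite e' subrr.
Qed.

Lemma Phi_bd3 F : supp3 G F -> Phi (bd3 F) = 0.
Proof.
move=> sF; rewrite /Phi.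
under eq_bigr do rewrite ffunE rmorph_sum mulr_suml.
rewrite exchange_big /= big1 // => u _.
under eq_bigr do rewrite intrM -mulrA.
rewrite -mulr_sumr.
case: (eqVneq (F u) 0) => [->|/sF]; first by rewrite mul0r.
case/and3P=> G1 G2 G3.
under eq_bigr do rewrite !(intrD, rmorphN, mulrDl, mulNr).
rewrite !(big_split, sumrN) /= !sum_delta.
by rewrite Lf_cocycle // mulr0.
Qed.


Lemma Phi_bdry c : bdry2 G c -> Phi c = 0.
Proof. by case=> F [sF ->]; apply: Phi_bd3. Qed.

Definition zeta (t : sT) : sT := ((sec (pi t))^-1 * t)%g.
Lemma zetaZ t : t \in Gt -> zeta t \in Z.
Proof.
move=> Dt; have Gx := piG1 Dt; have Ds := secG1 Gx.
apply: inZ; first by rewrite groupM ?groupV.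
by rewrite morphM ?groupV // morphV // secP // mulVg.
Qed.

Definition Inv t d w := exists c, [/\ supp2 G c, bd2 c = delta1 (pi t) - d
  & Phi c = L w - L (zeta t)].

Lemma Inv_base t : t \in Gt -> Inv t (delta1 (pi t)) (zeta t).
Proof.
move=> Dt; exists 0; split; [exact: supp20 | by rewrite bd20 subrr | by rewrite Phi0 subrr].
Qed.

Lemma zetaM t t' : t \in Gt -> t' \in Gt ->
  zeta (t * t') = (fc (pi t) (pi t') * zeta t * zeta t')%g.
Proof.
move=> Dt Dt'; set x := pi t; set y := pi t'.
have Gx : x \in G by apply: piG1. have Gy : y \in G by apply: piG1.
have Gxy := groupM Gx Gy.
apply: (@mulgI _ (sec (x * y))).
have -> : zeta (t * t') = ((sec (x * y))^-1 * (t * t'))%g by rewrite /zeta morphM.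
rewrite mulKVg.
have e1 : (sec (x * y) * fc x y = sec x * sec y)%g.
  rewrite -Zcomm ?fcZ ?secG1 //; by rewrite /fc mulgKV.
have e2 : (zeta t * sec y = sec y * zeta t)%g by rewrite Zcomm ?zetaZ ?secG1.
rewrite (mulgA (sec (x*y))) (mulgA (sec (x*y))) e1 -(mulgA (sec x)) -e2 (mulgA (sec x)).
by rewrite /zeta -/x -/y mulKVg -mulgA mulKVg.
Qed.

Lemma Inv_mul t t' d d' w w' : t \in Gt -> t' \in Gt -> w \in Z -> w' \in Z ->
  Inv t d w -> Inv t' d' w' -> Inv (t * t') (d + d') (w * w').
Proof.
move=> Dt Dt' Zw Zw' [c [sc bc pc]] [c' [sc' bc' pc']].
have Gx : pi t \in G by apply: piG1. have Gy : pi t' \in G by apply: piG1.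
exists (c + c' - delta2 (pi t) (pi t')); split.
- by apply: supp2B; [apply: supp2D | apply: supp2_delta].
- rewrite bd2B bd2D bc bc' bd2_delta morphM //.
  by apply/ffunP=> g; rewrite !ffunE; ring.
- rewrite PhiB PhiD pc pc' Phi_delta zetaM // /Lf /=.
  have Z1 := fcZ Gx Gy; have Z2 := zetaZ Dt; have Z3 := zetaZ Dt'.
  rewrite (LM (groupM Z1 Z2) Z3) (LM Z1 Z2) (LM Zw Zw'); ring.
Qed.

Lemma zeta_inv a : a \in Gt ->
  (zeta a^-1 * zeta a * fc (pi a) (pi a)^-1 = 1)%g.
Proof.
move=> Da; set x := pi a; have Gx : x \in G by apply: piG1.
have Gx' : (x^-1)%g \in G by rewrite groupV.
have e1 : (zeta a * fc x x^-1 = a * sec x^-1)%g.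
  have e0 : (zeta a * sec x = a)%g.
    by rewrite (Zcomm (zetaZ Da) (secG1 Gx)) /zeta -/x mulKVg.
  by rewrite /fc mulgV sec1 invg1 mulg1 mulgA e0.
rewrite -mulgA e1 /zeta morphV // -/x.
by rewrite -mulgA mulKg mulVg.
Qed.


Lemma Inv_comm a b : a \in Gt -> b \in Gt -> Inv [~ a, b]%g (delta1 1 *~ 2) 1.
Proof.
move=> Da Db.
have e : [~ a, b]%g = (a^-1 * b^-1 * a * b)%g by rewrite commgEl /conjg !mulgA.
have Da' : (a^-1)%g \in Gt by rewrite groupV.
have Db' : (b^-1)%g \in Gt by rewrite groupV.
have Za := zetaZ Da; have Zb := zetaZ Db; have Za' := zetaZ Da'; have Zb' := zetaZ Db'.
have H1 := Inv_mul Da' Db' Za' Zb' (Inv_base Da') (Inv_base Db').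
have H2 := Inv_mul (groupM Da' Db') Da (groupM Za' Zb') Za H1 (Inv_base Da).
have H3 := Inv_mul (groupM (groupM Da' Db') Da) Db (groupM (groupM Za' Zb') Za) Zb H2 (Inv_base Db).
rewrite e; case: H3 => c [sc bc pc].
have Gx : pi a \in G by apply: piG1. have Gy : pi b \in G by apply: piG1.
have Gx' : ((pi a)^-1)%g \in G by rewrite groupV.
have Gy' : ((pi b)^-1)%g \in G by rewrite groupV.
exists (c + delta2 (pi a) (pi a)^-1 + delta2 (pi b) (pi b)^-1); split.
- by apply: supp2D; [apply: supp2D | ]; rewrite //; apply: supp2_delta.
- rewrite !bd2D bc !bd2_delta !mulgV !morphV //.
  by apply/ffunP=> g; rewrite !ffunE; ring.
- rewrite !PhiD pc !Phi_delta /Lf /=.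
  rewrite (LM (groupM (groupM Za' Zb') Za) Zb) (LM (groupM Za' Zb') Za) (LM Za' Zb') L1.
  have ea : L (fc (pi a) (pi a)^-1) = - (L (zeta a^-1) + L (zeta a)).
    apply/eqP; rewrite -addr_eq0 addrC.
    have := congr1 L (zeta_inv Da); rewrite L1 (LM (groupM Za' Za) (fcZ Gx Gx')) (LM Za' Za).
    by move=> ->.
  have eb : L (fc (pi b) (pi b)^-1) = - (L (zeta b^-1) + L (zeta b)).
    apply/eqP; rewrite -addr_eq0 addrC.
    have := congr1 L (zeta_inv Db); rewrite L1 (LM (groupM Zb' Zb) (fcZ Gy Gy')) (LM Zb' Zb).
    by move=> ->.
  rewrite ea eb; ring.
Qed.

Lemma zeta1 : zeta 1 = 1%g.
Proof. by rewrite /zeta morph1 sec1 invg1 mul1g. Qed.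

Lemma Inv_gen n (c : 'I_n -> sT) : (forall i, c i \in commg_set Gt Gt) ->
  (\prod_(i < n) c i)%g \in Gt /\ exists m, Inv (\prod_(i < n) c i)%g (delta1 1 *~ m) 1.
Proof.
elim: n c => [|n IH] c hc.
  rewrite big_ord0 group1; split=> //; exists 1; rewrite mulr1z.
  by have := Inv_base (group1 Gt); rewrite morph1 zeta1.
rewrite big_ord_recr /=.
have [D1 [m hm]] := IH (fun i => c (widen_ord (leqnSn n) i)) (fun i => hc _).
have /imset2P[x y Dx Dy ->] := hc ord_max.
split; first by rewrite groupM ?groupR.
exists (m + 2).
have := Inv_mul D1 (groupR Dx Dy) (group1 _) (group1 _) hm (Inv_comm Dx Dy).
by rewrite mulg1 -mulrzDr.
Qed.

Lemma Phi_surjZ w : w \in Z -> exists c, cycle2 G c /\ Phi c = L w.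
Proof.
move=> Zw; have := subsetP kerD _ Zw; rewrite derg1 => /gen_prodgP[n [c hc ew]].
have [_ [m [c0 [sc bc pc]]]] := Inv_gen hc.
rewrite -ew in bc pc.
have p1 : pi w = 1%g by apply: mker.
have zw : zeta w = w by rewrite /zeta p1 sec1 invg1 mul1g.
rewrite p1 in bc; rewrite zw L1 in pc.
exists (- (c0 + delta2 1 1 *~ (m - 1))); split; last first.
  have f11 : fc 1 1 = 1%g by rewrite /fc mulg1 sec1 invg1 !mulg1.
  rewrite PhiN PhiD PhiMz Phi_delta pc /Lf /= f11 L1 mul0rz.
  by rewrite addr0 sub0r opprK.
split.
  apply: supp2N; apply: supp2D => //; apply: supp2Mz; apply: supp2_delta; exact: group1.
rewrite bd2N bd2D bd2Mz bc bd2_delta mulg1.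
by apply/ffunP=> g; rewrite !ffunE !ffunMzE !ffunE !mulrzz; ring.
Qed.

Lemma Phi_surj (v : 'Z_q) : exists c, cycle2 G c /\ Phi c = v.
Proof. by rewrite (L_surj v); apply: Phi_surjZ; rewrite groupX // z0Z. Qed.


Lemma card_Zq : #|{: 'Z_q}| = q.
Proof. by rewrite card_ord Zp_cast // q_gt1. Qed.

Lemma Phi_inj : H2_order G q -> forall c c', cycle2 G c -> cycle2 G c' ->
  Phi c = Phi c' -> bdry2 G (c - c').
Proof.
case=> s [sz scyc sdis scov].
have cov c : cycle2 G c -> exists i : 'I_q, bdry2 G (c - nth 0 s i).
  move=> /scov[c' c's hb].
  have hi : (index c' s < q)%N by rewrite -sz index_mem.
  by exists (Ordinal hi); rewrite /= nth_index.
pose F (i : 'I_q) := Phi (nth 0 s i).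
have allF v : v \in [seq F x | x in 'I_q].
  have [c [cc pc]] := Phi_surj v.
  have [i hi] := cov _ cc.
  apply/mapP; exists i; first by rewrite mem_enum.
  by rewrite /F -pc; apply/eqP; rewrite -subr_eq0 -PhiB Phi_bdry.
have injF : {in 'I_q &, injective F}.
  apply/image_injP; rewrite eqn_leq; apply/andP; split.
    by rewrite (leq_trans (card_size _)) // size_map -cardE.
  rewrite card_ord -{1}card_Zq; apply: subset_leq_card; apply/subsetP => v _.
  exact: allF.
move=> c c' cc cc' e.
have [i hi] := cov _ cc; have [j hj] := cov _ cc'.
have eij : i = j.
  apply: injF => //; rewrite /F.
  have e1 : Phi (nth 0 s i) = Phi c by apply/eqP; rewrite eq_sym -subr_eq0 -PhiB Phi_bdry.
  have e2 : Phi (nth 0 s j) = Phi c' by apply/eqP; rewrite eq_sym -subr_eq0 -PhiB Phi_bdry.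
  by rewrite e1 e2.
rewrite -eij in hj.
have := bdryB hi hj; rewrite opprB addrA subrK.
by [].
Qed.


Lemma conj_comm (x y : sT) : commute x y -> (x ^ y = x)%g.
Proof. by move=> h; rewrite conjgE h mulKg. Qed.
Lemma comm_conj (x y : sT) : (x ^ y = x)%g -> commute x y.
Proof. by move=> h; rewrite /commute conjgC h. Qed.
Lemma conj_commG (x y : gT) : commute x y -> (x ^ y = x)%g.
Proof. by move=> h; rewrite conjgE h mulKg. Qed.
Lemma comm_conjG (x y : gT) : (x ^ y = x)%g -> commute x y.
Proof. by move=> h; rewrite /commute conjgC h. Qed.

Lemma conjMZ gh z h : z \in Z -> h \in Gt -> ((gh * z) ^ h = gh ^ h * z)%g.
Proof. by move=> Zz Dh; rewrite conjMg (conj_comm (Zcomm Zz Dh)). Qed.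

Section Count.
Variables (H : {group sT}) (C : {set gT}) (g : gT) (gh : sT).
Hypotheses (sHG : H \subset Gt) (Dgh : gh \in Gt) (pgh : pi gh = g) (Cg : g \in C).
Hypothesis trans : forall y, y \in C -> exists2 h, h \in H & y = (g ^ pi h)%g.

Lemma decomp x : x \in pi @*^-1 C -> exists2 z, z \in Z & exists2 h, h \in H & x = ((gh * z) ^ h)%g.
Proof.
move=> /morphpreP[Dx Cx]; have [h Hh e] := trans Cx.
have Dh := subsetP sHG _ Hh.
exists ((gh ^ h)^-1 * x)%g.
  apply: inZ; first by rewrite groupM ?groupV ?groupJ.
  by rewrite morphM ?groupV ?groupJ // morphV ?groupJ // morphJ // pgh -e mulVg.
exists h => //; rewrite conjMZ //; last first.
  apply: inZ; first by rewrite groupM ?groupV ?groupJ.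
  by rewrite morphM ?groupV ?groupJ // morphV ?groupJ // morphJ // pgh -e mulVg.
by rewrite mulKVg.
Qed.

Lemma ghz_pre z : z \in Z -> (gh * z)%g \in pi @*^-1 C.
Proof.
move=> Zz; apply: mem_morphpre; first by rewrite groupM // ZGt.
by rewrite (morphM pi Dgh (ZGt Zz)) pgh (mker Zz) mulg1.
Qed.

Lemma cnt_comm : (forall x, x \in H -> pi x \in 'C[g]%g -> commute gh x) ->
  #|[set x ^: H | x in pi @*^-1 C]%g| = q.
Proof.
move=> hc.
have -> : [set x ^: H | x in pi @*^-1 C]%g = [set (gh * z) ^: H | z in Z]%g.
  apply/setP => X; apply/imsetP/imsetP => [[x hx ->]|[z Zz ->]].
    have [z Zz [h Hh ->]] := decomp hx.
    by exists z => //; rewrite classGidl.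
  by exists (gh * z)%g => //; apply: ghz_pre.
apply: card_in_imset => z z' Zz Zz' e.
have : (gh * z')%g \in ((gh * z) ^: H)%g by rewrite e class_refl.
case/imsetP=> h Hh e'.
have Dh := subsetP sHG _ Hh.
have cg : pi h \in 'C[g]%g.
  apply/cent1P; apply: esym; apply: comm_conjG.
  have := congr1 pi e'.
  rewrite (morphM pi Dgh (ZGt Zz')) (morphJ pi (groupM Dgh (ZGt Zz)) Dh).
  by rewrite (morphM pi Dgh (ZGt Zz)) pgh (mker Zz) (mker Zz') !mulg1 => <-.
have := e'; rewrite conjMZ // conj_comm; last exact: hc.
by move/mulgI.
Qed.

Lemma cnt_one : (exists2 x, x \in H & pi x \in 'C[g]%g /\ (gh * x != x * gh)%g) ->
  #|[set x ^: H | x in pi @*^-1 C]%g| = 1%N.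
Proof.
case=> x0 Hx0 [cx0 nc].
have Dx0 := subsetP sHG _ Hx0.
set z1 := (gh^-1 * gh ^ x0)%g.
have Zz1 : z1 \in Z.
  apply: inZ; first by rewrite groupM ?groupV ?groupJ.
  rewrite morphM ?groupV ?groupJ // morphV // morphJ // pgh.
  have cm : commute g (pi x0) by apply: esym; apply/cent1P.
  by rewrite (conj_commG cm) mulVg.
have z1n : z1 != 1%g.
  apply: contra nc; rewrite /z1 -eq_mulVg1 => /eqP e.
  by apply/eqP; apply: comm_conj.
have Zgen1 : Z = <[z1]>%g.
  have sub : (<[z1]> \subset Z)%g by rewrite cycle_subG.
  have dv := cardSg sub.
  case/primeP: primeZ => _ /(_ _ dv) /orP[/eqP h1|/eqP hq].
    by move: z1n; rewrite -order_eq1 orderE h1.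
  by apply/eqP; rewrite eq_sym eqEcard sub hq leqnn.
have pw k : (gh ^ (x0 ^+ k) = gh * z1 ^+ k)%g.
  elim: k => [|k IH]; first by rewrite !expg0 conjg1 mulg1.
  have ex0 : (gh ^ x0 = gh * z1)%g by rewrite /z1 mulKVg.
  by rewrite expgSr conjgM IH conjMZ ?groupX // ex0 -mulgA -expgS.
have -> : [set x ^: H | x in pi @*^-1 C]%g = [set gh ^: H]%g.
  apply/setP => X; rewrite inE; apply/imsetP/eqP => [[x hx ->]|->].
    have [z Zz [h Hh ->]] := decomp hx.
    move: Zz; rewrite Zgen1 => /cycleP[k ->].
    rewrite -pw -conjgM classGidl //.
    by rewrite groupM ?groupX.
  exists gh => //; apply: mem_morphpre => //; by rewrite pgh.
by rewrite cards1.
Qed.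

End Count.

Local Close Scope ring_scope.
Lemma pair2_cycle g z : g \in G -> z \in G -> commute g z -> cycle2 G (pair2 g z).
Proof.
move=> Gg Gz cgz; split.
  by rewrite pair2E; apply: supp2B; apply: supp2_delta.
rewrite pair2E bd2B !bd2_delta cgz.
by apply/ffunP=> u; rewrite !ffunE; ring.
Qed.

Lemma Phi_pair g x : g \in G -> x \in Gt -> pi x \in 'C[g] ->
  (Phi (pair2 g (pi x)) == 0)%R = (sec g * x == x * sec g).
Proof.
move=> Gg Dx cx; set z := pi x.
have Gz : z \in G by apply: piG1.
have cgz : commute g z by apply: esym; apply/cent1P.
have Dsg := secG1 Gg; have Dsz := secG1 Gz.
have Z1 := fcZ Gg Gz; have Z2 := fcZ Gz Gg.
have e1 : fc g z * (fc z g)^-1 = sec g * sec z * (sec z * sec g)^-1.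
  rewrite /fc !invMg invgK cgz mulgA -(mulgA _ _ (sec (z * g))) mulVg mulg1.
  by rewrite !mulgA.
rewrite pair2E PhiB !Phi_delta /Lf /= -(LV Z2) -(LM Z1 (groupVr Z2)) e1.
have Zw : sec g * sec z * (sec z * sec g)^-1 \in Z by rewrite -e1 groupM ?groupV.
apply/idP/idP.
  move/eqP/(L_eq0 Zw)/eqP; rewrite -eq_mulgV1 => /eqP e.
  have Zt : (sec z)^-1 * x \in Z.
    by apply: inZ; rewrite ?groupM ?groupV // morphM ?groupV // morphV // secP // mulVg.
  have ex : x = sec z * ((sec z)^-1 * x) by rewrite mulKVg.
  by rewrite ex mulgA e -(mulgA (sec z) (sec g)) -(mulgA (sec z) _ (sec g)) (Zcomm Zt Dsg).
set t := (sec z)^-1 * x.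
have Zt : t \in Z.
  by apply: inZ; rewrite ?groupM ?groupV // morphM ?groupV // morphV // secP // mulVg.
have ex : x = sec z * t by rewrite mulKVg.
move=> /eqP h.
have h2 : sec g * sec z * t = sec z * sec g * t.
  by rewrite -mulgA -ex h ex -mulgA (Zcomm Zt Dsg) mulgA.
by move/mulIg: h2 => ->; rewrite mulgV L1.
Qed.


Lemma comm_conjJ (a b k : gT) : commute a b -> commute (a ^ k) (b ^ k).
Proof. by move=> h; rewrite /commute -!conjMg h. Qed.

Lemma piDer : pi @* Gt^`(1) = G^`(1).
Proof. by rewrite morphim_der // piG. Qed.

Lemma mult_gen (w v : 'Z_q) : w != 0%R -> exists k : nat, v = (w *+ k)%R.
Proof.
move=> nw.
have uw : w \is a GRing.unit.
  rewrite -[w]natr_Zp unitZpE ?q_gt1 // prime_coprime //.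
  apply/negP => /dvdn_leq; rewrite lt0n => /(_ nw).
  have := ltn_ord w; move: (nat_of_ord w) => n; rewrite Zp_cast ?q_gt1 //.
  by move=> h1 h2; have := leq_ltn_trans h2 h1; rewrite ltnn.
exists (nat_of_ord (w^-1 * v)%R).
by rewrite -mulr_natr natr_Zp mulVKr.
Qed.

Section Main.
Variables (r : nat) (C : 'I_r -> {set gT}).
Hypothesis unamb : forall i, unambiguous G (C i).
Hypothesis H2q : H2_order G q.

Definition gi i : gT := odflt 1 [pick x in C i].

Lemma gi_in i : gi i \in C i.
Proof.
rewrite /gi; have [/imsetP[x Gx ->] _] := unamb i.
by case: pickP => [y //|/(_ x)]; rewrite class_refl.
Qed.

Lemma C_sub i y : y \in C i -> y \in G.
Proof.
have [/imsetP[x Gx ->] _] := unamb i.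
by case/imsetP=> k Gk ->; rewrite groupJ.
Qed.

Lemma trans_i i y : y \in C i -> exists2 h, h \in Gt^`(1) & y = gi i ^ pi h.
Proof.
move=> Cy; have [_ hu] := unamb i.
have [k Gk e] := hu _ _ (gi_in i) Cy.
move: Gk e; rewrite -piDer => /morphimP[h Dh Hh ->] e.
by exists h.
Qed.

Lemma trans_Gt i y : y \in C i -> exists2 h, h \in Gt & y = gi i ^ pi h.
Proof.
by case/trans_i=> h Hh e; exists h => //; apply: (subsetP (der_sub 1 Gt)).
Qed.

Definition Aprop (H : {set sT}) i := exists2 x, x \in H &
  pi x \in 'C[gi i] /\ (sec (gi i) * x != x * sec (gi i)).

Lemma transfer (H : {group sT}) i g' x : H <| Gt -> g' \in C i -> x \in H ->
  pi x \in 'C[g'] -> sec g' * x != x * sec g' -> Aprop H i.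
Proof.
move=> nH Cg' Hx cx nc.
have sHG := normal_sub nH.
have Dx := subsetP sHG _ Hx.
have [h Hh e] := trans_i Cg'.
have Dh : h \in Gt by apply: (subsetP (der_sub 1 Gt)).
have Gg := C_sub (gi_in i); have Gg' := C_sub Cg'.
set g := gi i in e Gg *; set gh := sec g.
have Dgh : gh \in Gt by apply: secG1.
set gh' := gh ^ h.
have Dgh' : gh' \in Gt by rewrite groupJ.
set zt := gh'^-1 * sec g'.
have Zzt : zt \in Z.
  apply: inZ; first by rewrite groupM ?groupV ?secG1.
  by rewrite morphM ?groupV ?secG1 // morphV // morphJ // secP // /gh secP // -e mulVg.
have nc' : gh' * x != x * gh'.
  apply: contra nc => /eqP h1; apply/eqP.
  have es : sec g' = gh' * zt by rewrite mulKVg.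
  by rewrite es -mulgA (Zcomm Zzt Dx) mulgA h1 -mulgA.
exists (x ^ h^-1).
  by rewrite memJ_norm // (subsetP (normal_norm nH)) // groupV.
split.
  rewrite morphJ ?groupV // morphV //; apply/cent1P.
  have := comm_conjJ ((pi h)^-1) (esym (cent1P cx)).
  by rewrite e conjgK => /esym.
apply: contra nc' => /eqP h1; apply/eqP.
have := congr1 (fun y => y ^ h) h1 => /=.
rewrite (conjMg (sec (gi i)) (x ^ h^-1) h) (conjMg (x ^ h^-1) (sec (gi i)) h) conjgKV.
by [].
Qed.

Local Notation A := (Aprop Gt).
Local Notation B := (Aprop Gt^`(1)).

Lemma cntA i : A i -> #|[set x ^: Gt | x in pi @*^-1 C i]| = 1%N.
Proof.
move=> [x Dx [cx nc]].
apply: (cnt_one (g := gi i) (subxx _) (secG1 (C_sub (gi_in i)))) => //.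
- exact: secP (C_sub (gi_in i)).
- exact: gi_in.
- exact: trans_Gt.
- by exists x.
Qed.

Lemma cntnA i : ~ A i -> #|[set x ^: Gt | x in pi @*^-1 C i]| = q.
Proof.
move=> nA.
apply: (cnt_comm (g := gi i) (subxx _) (secG1 (C_sub (gi_in i)))) => //.
- exact: secP (C_sub (gi_in i)).
- exact: gi_in.
- exact: trans_Gt.
- move=> x Dx cx; apply/eqP; apply/negPn/negP => nc; apply: nA; by exists x.
Qed.

Lemma cntB i : B i -> #|[set x ^: Gt^`(1) | x in pi @*^-1 C i]| = 1%N.
Proof.
move=> [x Dx [cx nc]].
apply: (@cnt_one (Gt^`(1))%G _ (gi i) _ (der_sub 1 Gt) (secG1 (C_sub (gi_in i)))) => //.
- exact: secP (C_sub (gi_in i)).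
- exact: gi_in.
- exact: trans_i.
- by exists x.
Qed.

Lemma cntnB i : ~ B i -> #|[set x ^: Gt^`(1) | x in pi @*^-1 C i]| = q.
Proof.
move=> nA.
apply: (@cnt_comm (Gt^`(1))%G _ (gi i) _ (der_sub 1 Gt) (secG1 (C_sub (gi_in i)))) => //.
- exact: secP (C_sub (gi_in i)).
- exact: gi_in.
- exact: trans_i.
- move=> x Dx cx; apply/eqP; apply/negPn/negP => nc; apply: nA; by exists x.
Qed.

Lemma BA i : B i -> A i.
Proof. by case=> x Dx h; exists x => //; apply: (subsetP (der_sub 1 Gt)). Qed.

Lemma PgenA i g' z : ~ A i -> g' \in C i -> z \in 'C_G[g'] -> Phi (pair2 g' z) = 0%R.
Proof.
move=> nA Cg' /setIP[Gz cz].
have Gg' := C_sub Cg'.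
have Dx := secG1 Gz; have px := secP Gz.
apply/eqP; rewrite -{1}px Phi_pair //; last by rewrite px.
apply/negPn/negP => nc; apply: nA.
by apply: (transfer (normal_refl Gt) Cg' Dx) => //; rewrite px.
Qed.

Lemma QgenB i g' z : ~ B i -> g' \in C i -> z \in 'C_G[g'] :&: G^`(1) ->
  Phi (pair2 g' z) = 0%R.
Proof.
move=> nB Cg' /setIP[/setIP[Gz cz] Hz].
move: Hz cz; rewrite -piDer => /morphimP[x Dx Hx ->] cz.
have Gg' := C_sub Cg'.
apply/eqP; rewrite Phi_pair //.
apply/negPn/negP => nc; apply: nB.
exact: (transfer (der_normal 1 Gt) Cg' Hx).
Qed.

Lemma span_Phi0 (S : {ffun gT * gT -> int} -> Prop) c :
  in_span_H2 G S c -> (forall a, S a -> Phi a = 0%R) -> Phi c = 0%R.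
Proof.
move=> [s [hs hb]] h0.
have := Phi_bdry hb; rewrite PhiB Phi_sum => /eqP; rewrite subr_eq0 => /eqP ->.
rewrite big1_seq // => a /andP[_ ha].
by rewrite PhiMz h0 ?mul0rz //; apply: hs.
Qed.

Lemma span_mono (S S' : {ffun gT * gT -> int} -> Prop) c :
  (forall a, S a -> S' a) -> in_span_H2 G S c -> in_span_H2 G S' c.
Proof. by move=> hS [s [hs hb]]; exists s; split => // a /hs; apply: hS. Qed.

Lemma QP c : H2'_C G C c -> H2_C G C c.
Proof.
apply: span_mono => a [i [g [z [Cg /setIP[cz _] ->]]]].
by exists i, g, z.
Qed.

Lemma main_equiv : ~ same_subgroup_H2 G (H2_C G C) (H2'_C G C) <->
  ((forall i, ~ inert_class q pi (C i)) /\ exists i, mixed_class q pi (C i)).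
Proof.
have q1 : q <> 1%N by move=> e; have := q_gt1; rewrite e.
split.
- move=> nsame.
  have nB : forall i, ~ B i.
    move=> i hB; apply: nsame => c cc.
    case: hB => x Dx' [cx nc].
    have Dx : x \in Gt by apply: (subsetP (der_sub 1 Gt)).
    have Gg := C_sub (gi_in i).
    have nw : Phi (pair2 (gi i) (pi x)) != 0%R by rewrite Phi_pair.
    have [k ek] := mult_gen (Phi c) nw.
    have Qc : H2'_C G C c.
      exists [:: ((k : int), pair2 (gi i) (pi x))]; split.
        move=> a; rewrite inE => /eqP -> /=.
        exists i, (gi i), (pi x); split => //; first exact: gi_in.
        apply/setIP; split; last by rewrite -piDer mem_morphim.
        by apply/setIP; split; [apply: piG1 | ].
      rewrite big_cons big_nil addr0 /=.
      apply: Phi_inj => //.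
        apply: cycleMz; apply: pair2_cycle => //; first exact: piG1.
        by apply: esym; apply/cent1P.
      by rewrite PhiMz ek.
    by split => // _; apply: QP.
  have nA : exists i, A i.
    apply: NNPP => hn; apply: nsame => c cc.
    have Pimp : H2_C G C c -> H2'_C G C c.
      move=> Pc.
      have p0 : Phi c = 0%R.
        apply: (span_Phi0 Pc) => a [i [g [z [Cg cz ->]]]].
        by apply: (PgenA (i := i)) => // hA; apply: hn; exists i.
      exists [::]; split => //; rewrite big_nil subr0.
      have := Phi_inj H2q cc (cycle0 G); rewrite Phi0 subr0; by apply.
    by split => //; apply: QP.
  split.
    move=> i [nsplit nmixed].
    case: (classic (A i)) => hA.
      by apply: nmixed; split; [exact: cntA | exact: cntnB (nB i)].
    by apply: nsplit; exact: cntnA.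
  have [i0 hA] := nA; exists i0; split; [exact: cntA | exact: cntnB (nB i0)].
- case=> ninert [i0 [m1 m2]].
  have nB : forall i, ~ B i.
    move=> i hB; apply: (ninert i); split.
      by rewrite /split_class (cntA (BA hB)) => e; apply: q1.
    by case=> _; rewrite (cntB hB) => e; apply: q1.
  have hA0 : A i0.
    apply: NNPP => nA; move: m1; rewrite (cntnA nA); exact: q1.
  move=> same.
  case: hA0 => x Dx [cx nc].
  have Gg := C_sub (gi_in i0).
  have Gz : pi x \in G by apply: piG1.
  have cc : cycle2 G (pair2 (gi i0) (pi x)).
    by apply: pair2_cycle => //; apply: esym; apply/cent1P.
  have Pc : H2_C G C (pair2 (gi i0) (pi x)).
    exists [:: (1%R, pair2 (gi i0) (pi x))]; split.
      move=> a; rewrite inE => /eqP -> /=.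
      exists i0, (gi i0), (pi x); split => //; first exact: gi_in.
      by rewrite inE Gz cx.
    by rewrite big_cons big_nil addr0 mulr1z subrr; apply: bdry0.
  have Qc := (proj1 (same _ cc)) Pc.
  have : Phi (pair2 (gi i0) (pi x)) = 0%R.
    apply: (span_Phi0 Qc) => a [i [g [z [Cg cz ->]]]].
    exact: (QgenB (nB i)).
  by move/eqP; rewrite Phi_pair // (negbTE nc).
Qed.

End Main.

End Cover2.

Local Close Scope group_scope.

Theorem corollary5p3 (p : nat) (gT : finGroupType) (G : {group gT})
  (sT : finGroupType) (Gt : {group sT}) (pi : {morphism Gt >-> gT})
  (r : nat) (C : 'I_r -> {set gT}) :
  prime p -> pseudosimple G -> split_pp_type p G -> schur_cover G pi ->
  (forall i, unambiguous G (C i)) ->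
  (~ same_subgroup_H2 G (H2_C G C) (H2'_C G C) <->
   ((forall i, ~ inert_class p pi (C i)) /\ exists i, mixed_class p pi (C i))).
Proof.
Local Open Scope group_scope.
move=> pp _ [_ _ H2p] [piG kerZ kerD H2k] unamb.
have qp : #|'ker pi| = p := H2_order_uniq H2k H2p.
have primeZ : prime #|'ker pi| by rewrite qp.
rewrite -qp.
exact: (main_equiv piG kerZ primeZ kerD unamb H2k).
Qed.
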